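(* Let $G$ be a non-cyclic group having a maximal subgroup $M$ that is cyclic of order $p^n$ with $p$ prime and $n\geq 1$. Then $H_1(|\mathcal{C}(G)|;\mathbb{Z})$ has rank at least $(p-1)(G:M)$, and has infinite rank if $G$ is infinite. In particular $|\mathcal{C}(G)|$ is not simply connected.
   Context: For a group $G$, the coset poset $\mathcal{C}(G)$ is the set of left cosets of all proper subgroups of $G$ (including the trivial subgroup), ordered by inclusion, and $|\mathcal{C}(G)|$ is the geometric realization of its order complex (chains). *)

(* Defs.v *)
(* Groups are possibly infinite, so they are given by an
   explicit carrier with operations and axioms. *)
From Stdlib Require Import ZArith List Znumtheory Relations.
Import ListNotations.
Open Scope Z_scope.

Record group := Group {
  gT :> Type;
  gmul : gT -> gT -> gT;
  gone : gT;
  ginv : gT -> gT;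
  gmulA : forall x y z, gmul x (gmul y z) = gmul (gmul x y) z;
  gmul1l : forall x, gmul gone x = x;
  gmulVl : forall x, gmul (ginv x) x = gone
}.
Arguments gmul {g}. Arguments gone {g}. Arguments ginv {g}.

Fixpoint gpow_nat {G : group} (g : G) (n : nat) : G :=
  match n with O => gone | S k => gmul g (gpow_nat g k) end.

Definition gpow {G : group} (g : G) (z : Z) : G :=
  match z with
  | Z0 => gone
  | Zpos q => gpow_nat g (Pos.to_nat q)
  | Zneg q => ginv (gpow_nat g (Pos.to_nat q))
  end.

Definition subgroup {G : group} (H : G -> Prop) : Prop :=
  H gone /\ (forall x y, H x -> H y -> H (gmul x y)) /\ (forall x, H x -> H (ginv x)).

Definition proper_subgroup {G : group} (H : G -> Prop) : Prop :=
  subgroup H /\ exists x, ~ H x.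

Definition maximal_subgroup {G : group} (M : G -> Prop) : Prop :=
  proper_subgroup M /\
  forall K : G -> Prop, subgroup K -> (forall x, M x -> K x) ->
    (forall x, K x <-> M x) \/ (forall x, K x).

Definition cyclic_subgroup {G : group} (M : G -> Prop) : Prop :=
  exists g, forall x, M x <-> exists z : Z, x = gpow g z.

Definition cyclic_group (G : group) : Prop :=
  exists g : G, forall x : G, exists z : Z, x = gpow g z.

Definition has_card {G : group} (M : G -> Prop) (m : nat) : Prop :=
  exists l : list G, NoDup l /\ length l = m /\ forall x, M x <-> In x l.

Definition infinite_group (G : group) : Prop :=
  ~ exists l : list G, forall x : G, In x l.

Definition lcoset {G : group} (x : G) (H : G -> Prop) : G -> Prop :=
  fun y => exists h, H h /\ y = gmul x h.

Definition distinct_lcosets {G : group} (M : G -> Prop) (reps : list G) : Prop :=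
  ForallOrdPairs (fun x y => ~ (forall t, lcoset x M t <-> lcoset y M t)) reps.

Definition coset_poset (G : group) (S : G -> Prop) : Prop :=
  exists (x : G) (H : G -> Prop), proper_subgroup H /\ S = lcoset x H.

Definition proper_incl {G : group} (S T : G -> Prop) : Prop :=
  (forall y, S y -> T y) /\ ~ (forall y, T y -> S y).

(* Chains are oriented along the order (v0 < v1 < ... ). *)

Definition has_sum {X : Type} (f : X -> Z) (s : Z) : Prop :=
  exists l : list X, NoDup l /\ (forall x, f x <> 0 -> In x l) /\
    s = fold_right (fun x acc => f x + acc) 0 l.

Definition chain1 (V : Type) := V -> V -> Z.
Definition chain2 (V : Type) := V -> V -> V -> Z.

Definition is_1chain {V : Type} (P : V -> Prop) (lt : V -> V -> Prop)
  (c : chain1 V) : Prop :=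
  (forall u v, c u v <> 0 -> P u /\ P v /\ lt u v) /\
  exists l : list (V * V), forall u v, c u v <> 0 -> In (u, v) l.

Definition is_2chain {V : Type} (P : V -> Prop) (lt : V -> V -> Prop)
  (c : chain2 V) : Prop :=
  (forall u v w, c u v w <> 0 -> P u /\ P v /\ P w /\ lt u v /\ lt v w) /\
  exists l : list (V * V * V), forall u v w, c u v w <> 0 -> In (u, v, w) l.

(* boundary of edge (u,v) is v - u *)
Definition is_1cycle {V : Type} (P : V -> Prop) (lt : V -> V -> Prop)
  (c : chain1 V) : Prop :=
  is_1chain P lt c /\ forall w, has_sum (fun u => c u w - c w u) 0.

(* boundary of (a,b,c) is (b,c) - (a,c) + (a,b) *)
Definition is_1boundary {V : Type} (P : V -> Prop) (lt : V -> V -> Prop)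
  (c : chain1 V) : Prop :=
  exists d : chain2 V, is_2chain P lt d /\
    forall u v, has_sum (fun x => d x u v - d u x v + d u v x) (c u v).

Definition lincomb {V : Type} (a : list Z) (zs : list (chain1 V)) : chain1 V :=
  fun u v => fold_right (fun az acc => fst az * snd az u v + acc) 0 (combine a zs).

(* rank of H_1(order complex; Z) is at least k: there are k cycles whose
   classes are Z-linearly independent in H_1 *)
Definition H1_rank_ge {V : Type} (P : V -> Prop) (lt : V -> V -> Prop)
  (k : nat) : Prop :=
  exists zs : list (chain1 V), length zs = k /\ Forall (is_1cycle P lt) zs /\
    forall a : list Z, length a = k -> Exists (fun x => x <> 0) a ->
      ~ is_1boundary P lt (lincomb a zs).

Definition H1_infinite_rank {V : Type} (P : V -> Prop) (lt : V -> V -> Prop) : Prop :=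
  forall k : nat, H1_rank_ge P lt k.

Definition adj {V : Type} (P : V -> Prop) (lt : V -> V -> Prop) (u v : V) : Prop :=
  P u /\ P v /\ (u = v \/ lt u v \/ lt v u).

Fixpoint is_edge_path {V : Type} (P : V -> Prop) (lt : V -> V -> Prop)
  (l : list V) : Prop :=
  match l with
  | [] => False
  | [u] => P u
  | u :: ((v :: _) as t) => adj P lt u v /\ is_edge_path P lt t
  end.

Definition edge_move {V : Type} (P : V -> Prop) (lt : V -> V -> Prop)
  (l l' : list V) : Prop :=
  (exists l1 l2 u v w, l = l1 ++ u :: v :: w :: l2 /\ l' = l1 ++ u :: w :: l2 /\
     adj P lt u v /\ adj P lt v w /\ adj P lt u w) \/
  (exists l1 l2 u, l = l1 ++ u :: u :: l2 /\ l' = l1 ++ u :: l2).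

Definition edge_equiv {V : Type} (P : V -> Prop) (lt : V -> V -> Prop) :
  list V -> list V -> Prop :=
  clos_refl_sym_trans (list V) (edge_move P lt).

Definition simply_connected {V : Type} (P : V -> Prop) (lt : V -> V -> Prop) : Prop :=
  (exists v, P v) /\
  (forall u v, P u -> P v -> exists l, is_edge_path P lt l /\
      hd_error l = Some u /\ last l u = v) /\
  (forall v0 l, P v0 -> is_edge_path P lt l -> hd_error l = Some v0 ->
      last l v0 = v0 -> edge_equiv P lt l [v0]).

(* Main.v *)
Require Import Defs.
From Stdlib Require Import ZArith List Znumtheory Relations.
From Stdlib Require Import Classical ClassicalEpsilon Permutation Lia FunctionalExtensionality.
Import ListNotations.
Open Scope Z_scope.

Definition dec (P : Prop) : {P} + {~P} := excluded_middle_informative P.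
Definition ind (P : Prop) : Z := if dec P then 1 else 0.
Definition eqd {X : Type} (x y : X) : {x = y} + {x <> y} := dec (x = y).

Lemma ind_T (P : Prop) : P -> ind P = 1.
Proof. unfold ind; destruct (dec P); tauto. Qed.
Lemma ind_F (P : Prop) : ~ P -> ind P = 0.
Proof. unfold ind; destruct (dec P); tauto. Qed.
Lemma ind_iff (P Q : Prop) : (P <-> Q) -> ind P = ind Q.
Proof. intros H; unfold ind; destruct (dec P), (dec Q); tauto. Qed.
Lemma ind_and (P Q : Prop) : ind (P /\ Q) = ind P * ind Q.
Proof. unfold ind; destruct (dec P), (dec Q), (dec (P /\ Q)); tauto || lia. Qed.

Definition Sm {X : Type} (l : list X) (f : X -> Z) : Z :=
  fold_right (fun x acc => f x + acc) 0 l.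

Lemma S_cons {X} (x : X) l f : Sm (x :: l) f = f x + Sm l f.
Proof. reflexivity. Qed.
Lemma S_nil {X} (f : X -> Z) : Sm [] f = 0.
Proof. reflexivity. Qed.
Lemma S_app {X} (l1 l2 : list X) f : Sm (l1 ++ l2) f = Sm l1 f + Sm l2 f.
Proof. induction l1; simpl; [lia|]. unfold Sm in *; simpl; rewrite IHl1; lia. Qed.
Lemma S_ext {X} (l : list X) f g : (forall x, In x l -> f x = g x) -> Sm l f = Sm l g.
Proof.
  induction l; intros H; [reflexivity|]. rewrite !S_cons, H, IHl; auto with datatypes.
Qed.
Lemma S_plus {X} (l : list X) f g : Sm l (fun x => f x + g x) = Sm l f + Sm l g.
Proof. induction l; [reflexivity|]. rewrite !S_cons, IHl; lia. Qed.
Lemma S_minus {X} (l : list X) f g : Sm l (fun x => f x - g x) = Sm l f - Sm l g.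
Proof. induction l; [reflexivity|]. rewrite !S_cons, IHl; lia. Qed.
Lemma S_scal {X} (l : list X) c f : Sm l (fun x => c * f x) = c * Sm l f.
Proof. induction l; [simpl; lia|]. rewrite !S_cons, IHl; lia. Qed.
Lemma S_zero {X} (l : list X) f : (forall x, In x l -> f x = 0) -> Sm l f = 0.
Proof. intros H. rewrite (S_ext l f (fun _ => 0)) by auto. clear H. induction l; simpl; auto. Qed.
Lemma S_swap {X Y} (l1 : list X) (l2 : list Y) F :
  Sm l1 (fun x => Sm l2 (fun y => F x y)) = Sm l2 (fun y => Sm l1 (fun x => F x y)).
Proof.
  induction l1.
  - rewrite S_nil. symmetry; apply S_zero; auto.
  - rewrite S_cons, IHl1. rewrite <- S_plus. reflexivity.
Qed.
Lemma S_perm {X} (l1 l2 : list X) f : Permutation l1 l2 -> Sm l1 f = Sm l2 f.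
Proof. induction 1; simpl; auto; unfold Sm in *; simpl in *; lia. Qed.

Lemma S_filter {X} (l : list X) f :
  Sm l f = Sm (filter (fun x => negb (Z.eqb (f x) 0)) l) f.
Proof.
  induction l; [reflexivity|]. cbn [filter]. destruct (Z.eqb_spec (f a) 0); cbn [negb];
  rewrite S_cons, IHl; try rewrite S_cons; lia.
Qed.

Lemma S_unique {X} (l1 l2 : list X) f :
  NoDup l1 -> NoDup l2 -> (forall x, f x <> 0 -> In x l1) -> (forall x, f x <> 0 -> In x l2) ->
  Sm l1 f = Sm l2 f.
Proof.
  intros N1 N2 H1 H2. rewrite (S_filter l1), (S_filter l2). apply S_perm.
  apply NoDup_Permutation; try apply NoDup_filter; auto.
  intros x; rewrite !filter_In. destruct (Z.eqb_spec (f x) 0); simpl; intuition.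
Qed.

Lemma S_ind_eq {X} (l : list X) a g : NoDup l -> In a l ->
  Sm l (fun u => ind (u = a) * g u) = g a.
Proof.
  induction l; intros N Ha; [destruct Ha|]. inversion N; subst. rewrite S_cons.
  destruct Ha as [->|Ha].
  - rewrite ind_T by auto. rewrite S_zero; [lia|]. intros x Hx. rewrite ind_F; [lia|].
    intros ->; tauto.
  - rewrite ind_F by (intros ->; tauto). rewrite IHl; auto.
Qed.

Lemma has_sum_S {X} (f : X -> Z) l : NoDup l -> (forall x, f x <> 0 -> In x l) ->
  has_sum f (Sm l f).
Proof. intros. exists l. auto. Qed.

Lemma has_sum_eq {X} (f : X -> Z) s l : has_sum f s -> NoDup l -> (forall x, f x <> 0 -> In x l) ->
  s = Sm l f.
Proof. intros [l' [N' [H' ->]]] N H. apply (S_unique l' l f); auto. Qed.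

Arguments gmulA {g}. Arguments gmul1l {g}. Arguments gmulVl {g}.
Section Grp.
Variable G : group.
Implicit Types x y : G.

Lemma mulVr x : gmul x (ginv x) = gone.
Proof.
  rewrite <- (gmul1l (gmul x (ginv x))).
  rewrite <- (gmulVl (ginv x)) at 1.
  rewrite <- gmulA. rewrite (gmulA (ginv x)). rewrite gmulVl, gmul1l. apply gmulVl.
Qed.
Lemma mul1r x : gmul x gone = x.
Proof. rewrite <- (gmulVl x), gmulA, mulVr, gmul1l. reflexivity. Qed.
Lemma mulKg x y : gmul (ginv x) (gmul x y) = y.
Proof. rewrite gmulA, gmulVl, gmul1l; reflexivity. Qed.
Lemma mulKVg x y : gmul x (gmul (ginv x) y) = y.
Proof. rewrite gmulA, mulVr, gmul1l; reflexivity. Qed.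
Lemma mul_cancel x y (z : G) : gmul x y = gmul x z -> y = z.
Proof. intros H. rewrite <- (mulKg x y), H, mulKg; reflexivity. Qed.
Lemma inv_uniq x y : gmul x y = gone -> y = ginv x.
Proof. intros H. apply (mul_cancel x). rewrite H, mulVr; reflexivity. Qed.
Lemma invM x y : ginv (gmul x y) = gmul (ginv y) (ginv x).
Proof. symmetry; apply inv_uniq. rewrite <- gmulA, (gmulA y), mulVr, gmul1l, mulVr. reflexivity. Qed.
Lemma invK x : ginv (ginv x) = x.
Proof. symmetry; apply inv_uniq. apply gmulVl. Qed.
Lemma inv1 : ginv (@gone G) = gone.
Proof. symmetry; apply inv_uniq. apply mul1r. Qed.

Lemma gpow_nat_r (g : G) k : gpow_nat g (S k) = gmul (gpow_nat g k) g.
Proof.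
  induction k; simpl. rewrite mul1r, gmul1l; reflexivity.
  simpl in IHk. rewrite IHk at 1. rewrite gmulA. reflexivity.
Qed.

Lemma gpow_pos (g : G) z : 0 <= z -> gpow g z = gpow_nat g (Z.to_nat z).
Proof. destruct z; simpl; auto; lia. Qed.
Lemma gpow_neg (g : G) z : z < 0 -> gpow g z = ginv (gpow_nat g (Z.to_nat (- z))).
Proof. destruct z; simpl; auto; lia. Qed.

Lemma gpow_succ (g : G) z : gpow g (Z.succ z) = gmul g (gpow g z).
Proof.
  destruct (Z_lt_le_dec z (-1)) as [H|H].
  - rewrite !gpow_neg by lia.
    replace (Z.to_nat (- z)) with (S (Z.to_nat (- Z.succ z))) by lia.
    rewrite gpow_nat_r, invM, mulKVg. reflexivity.
  - destruct (Z.eq_dec z (-1)) as [->|H'].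
    + simpl. rewrite mul1r, mulVr. reflexivity.
    + rewrite !gpow_pos by lia. replace (Z.to_nat (Z.succ z)) with (S (Z.to_nat z)) by lia.
      reflexivity.
Qed.

Lemma gpow_pred (g : G) z : gpow g (Z.pred z) = gmul (ginv g) (gpow g z).
Proof.
  rewrite <- (Z.succ_pred z) at 2. rewrite gpow_succ, mulKg. reflexivity.
Qed.

Lemma gpow0 (g : G) : gpow g 0 = gone.
Proof. reflexivity. Qed.
Lemma gpow1 (g : G) : gpow g 1 = g.
Proof. simpl. apply mul1r. Qed.

Lemma gpow_add (g : G) a b : gpow g (a + b) = gmul (gpow g a) (gpow g b).
Proof.
  revert b. induction a using Z.peano_ind; intros b.
  - simpl. rewrite gmul1l. reflexivity.
  - replace (Z.succ a + b) with (Z.succ (a + b)) by lia.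
    rewrite !gpow_succ, IHa, gmulA. reflexivity.
  - replace (Z.pred a + b) with (Z.pred (a + b)) by lia.
    rewrite !gpow_pred, IHa, gmulA. reflexivity.
Qed.

Lemma gpow_opp (g : G) a : gpow g (- a) = ginv (gpow g a).
Proof. apply inv_uniq. rewrite <- gpow_add. replace (a + - a) with 0 by lia. reflexivity. Qed.

Lemma gpow_mul (g : G) a b : gpow (gpow g a) b = gpow g (a * b).
Proof.
  induction b using Z.peano_ind.
  - rewrite Z.mul_0_r. reflexivity.
  - rewrite gpow_succ, IHb, <- gpow_add. f_equal; lia.
  - rewrite gpow_pred, IHb, <- gpow_opp, <- gpow_add. f_equal; lia.
Qed.

Lemma gpow_one z : gpow (@gone G) z = gone.
Proof.
  induction z using Z.peano_ind; auto.
  - rewrite gpow_succ, IHz, gmul1l; auto.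
  - rewrite gpow_pred, IHz, inv1, gmul1l; auto.
Qed.

Lemma subgroup_pow (H : G -> Prop) g z : subgroup H -> H g -> H (gpow g z).
Proof.
  intros [H1 [HM HI]] Hg. induction z using Z.peano_ind.
  - exact H1.
  - rewrite gpow_succ; auto.
  - rewrite gpow_pred; auto.
Qed.

Definition Cyc (s : G) : G -> Prop := fun x => exists z, x = gpow s z.
Definition Triv : G -> Prop := fun x => x = gone.

Lemma Cyc_sub s : subgroup (Cyc s).
Proof.
  split; [|split].
  - exists 0; reflexivity.
  - intros x y [a ->] [b ->]. exists (a + b). rewrite gpow_add; auto.
  - intros x [a ->]. exists (- a). rewrite gpow_opp; auto.
Qed.
Lemma Cyc_self s : Cyc s s.
Proof. exists 1. rewrite gpow1; auto. Qed.
Lemma Triv_sub : subgroup Triv.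
Proof.
  unfold Triv; split; [|split]; auto.
  - intros x y -> ->. apply gmul1l.
  - intros x ->. apply inv1.
Qed.

Lemma lcoset_self (H : G -> Prop) x : subgroup H -> lcoset x H x.
Proof. intros [H1 _]. exists gone. split; auto. rewrite mul1r; auto. Qed.

Lemma lcoset_mem (H : G -> Prop) x y : subgroup H -> lcoset x H y -> H (gmul (ginv x) y).
Proof. intros _ [h [Hh ->]]. rewrite mulKg. auto. Qed.

Lemma lcoset_memP (H : G -> Prop) x y : H (gmul (ginv x) y) -> lcoset x H y.
Proof. intros Hh. exists (gmul (ginv x) y). split; auto. rewrite mulKVg; auto. Qed.

Lemma lcoset_diff (H : G -> Prop) x a b : subgroup H -> lcoset x H a -> lcoset x H b ->
  H (gmul (ginv a) b).
Proof.
  intros Hs [h [Hh ->]] [k [Hk ->]]. destruct Hs as [_ [HM HI]].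
  rewrite invM, <- gmulA, mulKg. auto.
Qed.

Lemma lcoset_move (H : G -> Prop) x q : subgroup H -> lcoset x H q ->
  forall g, lcoset x H g <-> lcoset q H g.
Proof.
  intros Hs Hq g. split; intros Hg.
  - apply lcoset_memP. apply (lcoset_diff H x); auto.
  - destruct Hs as [H1 [HM HI]]. destruct Hq as [h [Hh ->]]. destruct Hg as [k [Hk ->]].
    exists (gmul h k). split; auto. rewrite gmulA; auto.
Qed.

Lemma lcoset_Triv x g : lcoset x Triv g <-> g = x.
Proof.
  unfold lcoset, Triv. split.
  - intros [h [-> ->]]. apply mul1r.
  - intros ->. exists gone. rewrite mul1r. auto.
Qed.
End Grp.
Arguments Cyc {G}. Arguments Triv {G}.

Lemma ex_min (P : nat -> Prop) : (exists n, P n) -> exists n, P n /\ forall k, P k -> (n <= k)%nat.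
Proof.
  intros [n Hn]. induction n as [n IH] using (well_founded_induction lt_wf).
  destruct (classic (exists k, P k /\ (k < n)%nat)) as [[k [Hk Hlt]]|Hno].
  - apply (IH k Hlt Hk).
  - exists n. split; auto. intros k Hk. destruct (Nat.lt_ge_cases k n); auto.
    exfalso; apply Hno; eauto.
Qed.

Lemma nodup_map_seq {X} (f : nat -> X) a k :
  (forall i j, (a <= i)%nat -> (i < j)%nat -> (j < a + k)%nat -> f i <> f j) ->
  NoDup (map f (seq a k)).
Proof.
  revert a; induction k; intros a H; simpl; constructor.
  - rewrite in_map_iff. intros [j [Hj Hin]]. rewrite in_seq in Hin.
    apply (H a j); auto; lia.
  - apply IHk. intros i j Hi Hij Hj. apply H; lia.
Qed.

Lemma gpow_diff (G : group) (m : G) a b : gpow m a = gpow m b -> gpow m (b - a) = gone.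
Proof.
  intros H. apply (mul_cancel G (gpow m a)). rewrite <- gpow_add, mul1r.
  replace (a + (b - a)) with b by lia. auto.
Qed.

Lemma order_facts (G : group) (M : G -> Prop) (m : G) (N : nat) :
  (forall x, M x <-> exists z, x = gpow m z) -> has_card M N ->
  gpow m (Z.of_nat N) = gone /\ forall e, gpow m e = gone -> (Z.of_nat N | e).
Proof.
  intros HM [LM [ND [Hlen HL]]].
  set (f := fun k : nat => gpow m (Z.of_nat k)).
  assert (Hex : exists d, (1 <= d)%nat /\ f d = gone).
  { apply NNPP; intros Hno.
    assert (NoDup (map f (seq 0 (S N)))).
    { apply nodup_map_seq. intros i j _ Hij _ Heq. apply Hno. exists (j - i)%nat. split; [lia|].
      unfold f in *. rewrite Nat2Z.inj_sub by lia. apply gpow_diff; auto. }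
    assert (incl (map f (seq 0 (S N))) LM).
    { intros x Hx. apply HL. apply in_map_iff in Hx. destruct Hx as [k [<- _]].
      apply HM. exists (Z.of_nat k); reflexivity. }
    pose proof (NoDup_incl_length H H0). rewrite length_map, length_seq in H1. lia. }
  destruct (ex_min _ Hex) as [d [[Hd1 Hd] Hmin]].
  assert (Hdiv : forall e, gpow m e = gone -> (Z.of_nat d | e)).
  { intros e He. pose proof (Z_div_mod_eq_full e (Z.of_nat d)).
    pose proof (Z.mod_pos_bound e (Z.of_nat d) ltac:(lia)).
    set (q := e / Z.of_nat d) in *. set (r := e mod Z.of_nat d) in *.
    assert (Hr : gpow m r = gone).
    { rewrite H in He. rewrite gpow_add, <- gpow_mul in He. unfold f in Hd. rewrite Hd, gpow_one, gmul1l in He. auto. }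
    destruct (Z.eq_dec r 0) as [Hr0|Hr0].
    - exists q. lia.
    - exfalso. assert (Hle := Hmin (Z.to_nat r) ltac:(split; [lia|unfold f; rewrite Z2Nat.id by lia; auto])). lia. }
  assert (HdN : d = N).
  { assert (NoDup (map f (seq 0 d))).
    { apply nodup_map_seq. intros i j _ Hij Hj Heq. unfold f in Heq. apply gpow_diff in Heq.
      assert (Hle := Hmin (j - i)%nat ltac:(split; [lia|unfold f; rewrite Nat2Z.inj_sub by lia; auto])). lia. }
    assert (Permutation (map f (seq 0 d)) LM).
    { apply NoDup_Permutation; auto. intros x; split; intros Hx.
      - apply HL, HM. apply in_map_iff in Hx. destruct Hx as [k [<- _]]. exists (Z.of_nat k); reflexivity.
      - apply HL, HM in Hx. destruct Hx as [z ->]. apply in_map_iff.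
        exists (Z.to_nat (z mod Z.of_nat d)). split.
        + unfold f. pose proof (Z.mod_pos_bound z (Z.of_nat d) ltac:(lia)). rewrite Z2Nat.id by lia.
          rewrite (Z_div_mod_eq_full z (Z.of_nat d)) at 2. rewrite gpow_add, <- gpow_mul.
          unfold f in Hd. rewrite Hd, gpow_one, gmul1l. reflexivity.
        + apply in_seq. pose proof (Z.mod_pos_bound z (Z.of_nat d) ltac:(lia)). lia. }
    apply Permutation_length in H0. rewrite length_map, length_seq in H0. lia. }
  subst d. split; auto.
Qed.

Lemma relprime_pow (P k : Z) (n : nat) : rel_prime k P -> rel_prime k (P ^ Z.of_nat n).
Proof.
  intros H. induction n.
  - simpl. apply rel_prime_sym, rel_prime_1.
  - rewrite Nat2Z.inj_succ, Z.pow_succ_r by lia. apply rel_prime_mult; auto.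
Qed.

Lemma divide_pow (P : Z) (n : nat) : (1 <= n)%nat -> (P | P ^ Z.of_nat n).
Proof.
  intros Hn. destruct n; [lia|]. rewrite Nat2Z.inj_succ, Z.pow_succ_r by lia.
  exists (P ^ Z.of_nat n). ring.
Qed.

Definition Ksub {G : group} (m : G) (P : Z) : G -> Prop := fun x => exists z, x = gpow m (P * z).

Lemma Ksub_sub (G : group) (m : G) P : subgroup (Ksub m P).
Proof.
  split; [|split].
  - exists 0. rewrite Z.mul_0_r; reflexivity.
  - intros x y [a ->] [b ->]. exists (a + b). rewrite <- gpow_add. f_equal; ring.
  - intros x [a ->]. exists (- a). rewrite <- gpow_opp. f_equal; ring.
Qed.

Lemma HsubK (G : group) (M : G -> Prop) (m : G) (p n : nat) (H : G -> Prop) :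
  prime (Z.of_nat p) ->
  (forall x, M x <-> exists z, x = gpow m z) ->
  gpow m (Z.of_nat p ^ Z.of_nat n) = gone ->
  subgroup H -> (forall x, H x -> M x) -> ~ (forall x, M x -> H x) ->
  forall x, H x -> Ksub m (Z.of_nat p) x.
Proof.
  intros Hp HM Hord Hs HHM HnMH x Hx.
  destruct (proj1 (HM x) (HHM x Hx)) as [k Hk].
  destruct (classic (Z.of_nat p | k)) as [[z Hz]|Hnd].
  - exists z. rewrite Hk, Hz. f_equal; ring.
  - exfalso. apply HnMH. intros y Hy.
    pose proof (prime_rel_prime _ Hp k Hnd) as Hr.
    apply rel_prime_sym in Hr. apply (relprime_pow _ _ n) in Hr.
    destruct (rel_prime_bezout _ _ Hr) as [u v Huv].
    assert (Hm : H m).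
    { replace m with (gpow m 1) by apply gpow1. rewrite <- Huv, gpow_add.
      assert (E1 : gpow m (v * Z.of_nat p ^ Z.of_nat n) = gone).
      { rewrite Z.mul_comm, <- gpow_mul, Hord, gpow_one. reflexivity. }
      rewrite E1, mul1r. replace (u * k) with (k * u) by ring. rewrite <- gpow_mul, <- Hk.
      apply subgroup_pow; auto. }
    destruct (proj1 (HM y) Hy) as [zz ->]. apply subgroup_pow; auto.
Qed.

Lemma order_p (G : group) (m : G) (p n : nat) :
  (1 <= n)%nat ->
  (forall e, gpow m e = gone -> (Z.of_nat (p ^ n) | e)) ->
  forall e, gpow m e = gone -> (Z.of_nat p | e).
Proof.
  intros Hn H e He. apply H in He. rewrite Nat2Z.inj_pow in He.
  eapply Z.divide_trans; [apply (divide_pow _ n); auto|exact He].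
Qed.

Section Pos.
Variable G : group.

Lemma pi_irrefl (u : G -> Prop) : ~ proper_incl u u.
Proof. intros [_ H]; apply H; auto. Qed.
Lemma pi_trans (u v w : G -> Prop) : proper_incl u v -> proper_incl v w -> proper_incl u w.
Proof. intros [H1 H2] [H3 H4]. split; [auto|]. intros H. apply H4. intros y Hy; apply H1, H, Hy. Qed.
Lemma pi_asym (u v : G -> Prop) : proper_incl u v -> ~ proper_incl v u.
Proof. intros [H1 H2] [H3 H4]. tauto. Qed.

Lemma vertex_ne (u : G -> Prop) : coset_poset G u -> exists g, u g.
Proof. intros [x [H [[Hs _] ->]]]. exists x. apply lcoset_self; auto. Qed.

Lemma maxV (M : G -> Prop) y u : maximal_subgroup M -> coset_poset G u ->
  ~ proper_incl (lcoset y M) u.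
Proof.
  intros [[HMs _] Hmax] [x [H [[Hs [g Hg]] ->]]] [Hsub Hnot].
  assert (Hy : lcoset x H y) by (apply Hsub, lcoset_self; auto).
  assert (HMH : forall h, M h -> H h).
  { intros h Hh. assert (lcoset x H (gmul y h)) by (apply Hsub; exists h; auto).
    apply (lcoset_move G H x y Hs Hy) in H0. apply lcoset_mem in H0; auto.
    rewrite mulKg in H0; auto. }
  destruct (Hmax H Hs HMH) as [Heq|Hall].
  - apply Hnot. intros g' Hg'. apply (lcoset_move G H x y Hs Hy) in Hg'.
    destruct Hg' as [h [Hh ->]]. exists h; split; auto. apply Heq; auto.
  - apply Hg, Hall.
Qed.

Lemma sing_lt (H : G -> Prop) a b : subgroup H -> (exists h0, H h0 /\ h0 <> gone) ->
  lcoset b H a -> proper_incl (lcoset a Triv) (lcoset b H).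
Proof.
  intros Hs [h0 [Hh0 Hne]] Hab. split.
  - intros g Hg. apply lcoset_Triv in Hg. subst; auto.
  - intros Hall. assert (lcoset b H (gmul a h0)).
    { apply (lcoset_move G H b a Hs Hab). exists h0; auto. }
    apply Hall, lcoset_Triv in H0. apply Hne. apply (mul_cancel G a). rewrite mul1r; auto.
Qed.

Lemma neqV (M : G -> Prop) (s a y : G) : subgroup M -> ~ M s -> lcoset a (Cyc s) <> lcoset y M.
Proof.
  intros HMs Hs Heq. apply Hs.
  assert (H1 : lcoset y M a) by (rewrite <- Heq; apply lcoset_self, Cyc_sub).
  assert (H2 : lcoset y M (gmul a s)) by (rewrite <- Heq; exists s; split; auto; apply Cyc_self).
  pose proof (lcoset_diff G M y _ _ HMs H1 H2). rewrite mulKg in H. auto.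
Qed.

Lemma P1 (M K : G -> Prop) y (c : G) (a b : G -> Prop) :
  subgroup M -> subgroup K ->
  (forall H, subgroup H -> (forall x, H x -> M x) -> ~ (forall x, M x -> H x) -> forall x, H x -> K x) ->
  coset_poset G a -> coset_poset G b -> proper_incl a b -> proper_incl b (lcoset y M) ->
  ((forall g, a g -> lcoset c K g) <-> (forall g, b g -> lcoset c K g)).
Proof.
  intros HMs HKs HK Pa Pb [Hab _] [Hby Hny]. split; [|intros Hb g Hg; apply Hb, Hab, Hg].
  intros Ha. destruct Pb as [z [H [[Hs _] ->]]].
  assert (Hz : lcoset y M z) by (apply Hby, lcoset_self; auto).
  assert (HHM : forall h, H h -> M h).
  { intros h Hh. assert (lcoset y M (gmul z h)) by (apply Hby; exists h; auto).
    pose proof (lcoset_diff G M y _ _ HMs Hz H0). rewrite mulKg in H1; auto. }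
  assert (HnMH : ~ (forall x, M x -> H x)).
  { intros Hall. apply Hny. intros g Hg. apply (lcoset_move G M y z HMs Hz) in Hg.
    destruct Hg as [h [Hh ->]]. exists h; auto. }
  pose proof (HK H Hs HHM HnMH) as HHK.
  destruct (vertex_ne a Pa) as [q Hq].
  assert (HqC : lcoset c K q) by auto.
  assert (Hqb : lcoset z H q) by auto.
  intros g Hg. apply (lcoset_move G H z q Hs Hqb) in Hg. apply (lcoset_move G K c q HKs HqC).
  destruct Hg as [h [Hh ->]]. exists h; auto.
Qed.

End Pos.

Section Ch.
Context {V : Type} (P : V -> Prop) (lt : V -> V -> Prop).
Hypothesis lt_irr : forall u, ~ lt u u.
Hypothesis lt_trans : forall u v w, lt u v -> lt v w -> lt u w.

Lemma lt_asym u v : lt u v -> ~ lt v u.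
Proof. intros H1 H2. apply (lt_irr u). eauto. Qed.

Definition step (a b : V) : chain1 V := fun u v =>
  if dec (lt a b) then ind (u = a /\ v = b) else - ind (u = b /\ v = a).

Fixpoint wchain (l : list V) : chain1 V :=
  match l with
  | a :: ((b :: _) as t) => fun u v => step a b u v + wchain t u v
  | _ => fun _ _ => 0
  end.

Fixpoint steps_ok (l : list V) : Prop :=
  match l with
  | a :: ((b :: _) as t) => P a /\ P b /\ (lt a b \/ lt b a) /\ steps_ok t
  | _ => True
  end.

Lemma step_support a b u v : P a -> P b -> (lt a b \/ lt b a) -> step a b u v <> 0 ->
  P u /\ P v /\ lt u v /\ (u = a \/ u = b) /\ (v = a \/ v = b).
Proof.
  intros Pa Pb Hab. unfold step. destruct (dec (lt a b)) as [H|H].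
  - unfold ind; destruct (dec _) as [[-> ->]|]; [|lia]. intuition.
  - unfold ind; destruct (dec _) as [[-> ->]|]; [|lia]. intuition.
Qed.

Lemma wchain_support l u v : steps_ok l -> wchain l u v <> 0 ->
  P u /\ P v /\ lt u v /\ In u l /\ In v l.
Proof.
  induction l as [|a t IH]; [simpl; lia|]. destruct t as [|b t']; [simpl; lia|].
  intros [Pa [Pb [Hab Hok]]] Hne. change (step a b u v + wchain (b :: t') u v <> 0) in Hne.
  destruct (Z.eq_dec (step a b u v) 0) as [E|E].
  - destruct IH as [? [? [? [? ?]]]]; auto; [lia|]. simpl in *; intuition.
  - destruct (step_support a b u v Pa Pb Hab E) as [? [? [? [? ?]]]]. simpl; intuition; subst; auto.
Qed.

Lemma wchain_1chain l : steps_ok l -> is_1chain P lt (wchain l).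
Proof.
  intros Hok. split.
  - intros u v H. destruct (wchain_support l u v Hok H) as [? [? [? _]]]; auto.
  - exists (list_prod l l). intros u v H. destruct (wchain_support l u v Hok H) as [_ [_ [_ [? ?]]]].
    apply in_prod; auto.
Qed.

Lemma S_ind_const (U : list V) a c : NoDup U -> In a U -> Sm U (fun u => ind (u = a) * c) = c.
Proof. intros. apply (S_ind_eq U a (fun _ => c)); auto. Qed.

Lemma wchain_bd (U : list V) l d : NoDup U -> (forall x, In x l -> In x U) -> l <> [] -> steps_ok l ->
  forall w, Sm U (fun u => wchain l u w - wchain l w u) = ind (w = last l d) - ind (w = hd d l).
Proof.
  intros NU HU Hne Hok w. induction l as [|a t IH]; [congruence|].
  destruct t as [|b t'].
  - simpl. rewrite S_zero; [lia|]. auto.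
  - destruct Hok as [Pa [Pb [Hab Hok]]].
    change (Sm U (fun u => (step a b u w + wchain (b :: t') u w) - (step a b w u + wchain (b :: t') w u))
      = ind (w = last (b :: t') d) - ind (w = a)).
    rewrite (S_ext U _ (fun u => (step a b u w - step a b w u) + (wchain (b :: t') u w - wchain (b :: t') w u)))
      by (intros; lia).
    rewrite S_plus, IH; [| intros; apply HU; simpl; auto | congruence | auto]. simpl hd.
    assert (Ha : In a U) by (apply HU; simpl; auto).
    assert (Hb : In b U) by (apply HU; simpl; auto).
    unfold step. destruct (dec (lt a b)).
    + rewrite (S_ext U _ (fun u => ind (u = a) * ind (w = b) - ind (u = b) * ind (w = a))).
      2:{ intros x _. rewrite !ind_and. ring. }
      rewrite S_minus, !S_ind_const; auto. lia.
    + rewrite (S_ext U _ (fun u => ind (u = a) * ind (w = b) - ind (u = b) * ind (w = a))).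
      2:{ intros x _. rewrite !ind_and. ring. }
      rewrite S_minus, !S_ind_const; auto. lia.
Qed.

Definition eqdV := fun x y : V => @eqd V x y.

Lemma wchain_cycle (l : list V) a : steps_ok l -> hd_error l = Some a -> last l a = a ->
  is_1cycle P lt (wchain l).
Proof.
  intros Hok Hh Hl. split; [apply wchain_1chain; auto|]. intros w.
  set (U := nodup eqdV l).
  assert (NU : NoDup U) by apply NoDup_nodup.
  assert (HU : forall x, In x l -> In x U) by (intros; apply nodup_In; auto).
  assert (Hne : l <> []) by (intros ->; discriminate).
  pose proof (wchain_bd U l a NU HU Hne Hok w) as E.
  destruct l as [|a' t]; [congruence|]. simpl in Hh; inversion Hh; subst a'. simpl hd in E. rewrite Hl in E.
  replace 0 with (Sm U (fun u => wchain (a :: t) u w - wchain (a :: t) w u)) by lia.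
  apply has_sum_S; auto. intros x Hx. apply HU.
  destruct (Z.eq_dec (wchain (a :: t) x w) 0).
  - destruct (wchain_support (a :: t) w x) as [_ [_ [_ [_ ?]]]]; auto. lia.
  - destruct (wchain_support (a :: t) x w) as [_ [_ [_ [? _]]]]; auto.
Qed.

Definition psi (phi : V -> V -> Z) (u v : V) : Z :=
  if dec (lt u v) then phi u v else if dec (lt v u) then - phi v u else 0.

Fixpoint Wp (phi : V -> V -> Z) (l : list V) : Z :=
  match l with
  | a :: ((b :: _) as t) => psi phi a b + Wp phi t
  | _ => 0
  end.

Lemma psi_lt phi u v : lt u v -> psi phi u v = phi u v.
Proof. intros H; unfold psi; destruct (dec (lt u v)); tauto. Qed.
Lemma psi_gt phi u v : lt v u -> psi phi u v = - phi v u.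
Proof.
  intros H; unfold psi; destruct (dec (lt u v)) as [H'|]; [exfalso; eapply lt_asym; eauto|].
  destruct (dec (lt v u)); tauto.
Qed.
Lemma psi_eq phi u : psi phi u u = 0.
Proof. unfold psi; destruct (dec (lt u u)); [exfalso; eapply lt_irr; eauto|]. destruct (dec (lt u u)); tauto. Qed.

Lemma psi_anti phi u v : psi phi u v = - psi phi v u.
Proof.
  unfold psi. destruct (dec (lt u v)), (dec (lt v u)); try lia.
  exfalso; eapply lt_asym; eauto.
Qed.

Lemma wchain_pair (U : list V) l (w : V -> Z) V0 : NoDup U -> (forall x, In x l -> In x U) -> steps_ok l ->
  Sm U (fun u => w u * wchain l u V0) = Wp (fun u v => w u * ind (v = V0)) l.
Proof.
  intros NU HU Hok. induction l as [|a t IH]; [simpl; apply S_zero; intros; lia|].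
  destruct t as [|b t']; [simpl; apply S_zero; intros; lia|].
  destruct Hok as [Pa [Pb [Hab Hok]]].
  change (Sm U (fun u => w u * (step a b u V0 + wchain (b :: t') u V0)) =
    psi (fun u v => w u * ind (v = V0)) a b + Wp (fun u v => w u * ind (v = V0)) (b :: t')).
  rewrite (S_ext U _ (fun u => w u * step a b u V0 + w u * wchain (b :: t') u V0)) by (intros; lia).
  rewrite S_plus, IH; [| intros; apply HU; simpl; auto | auto].
  assert (Ha : In a U) by (apply HU; simpl; auto).
  assert (Hb : In b U) by (apply HU; simpl; auto).
  f_equal. unfold step. destruct (dec (lt a b)) as [H|H].
  - rewrite psi_lt by auto.
    rewrite (S_ext U _ (fun u => ind (u = a) * (w u * ind (V0 = b)))).
    2:{ intros x _. rewrite ind_and. ring. }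
    rewrite S_ind_eq; auto. rewrite (ind_iff (V0 = b) (b = V0)) by (split; auto). reflexivity.
  - destruct Hab as [|Hba]; [tauto|]. rewrite psi_gt by auto.
    rewrite (S_ext U _ (fun u => ind (u = b) * (- (w u * ind (V0 = a))))).
    2:{ intros x _. rewrite ind_and. ring. }
    rewrite S_ind_eq; auto. rewrite (ind_iff (V0 = a) (a = V0)) by (split; auto). reflexivity.
Qed.

Variable phi : V -> V -> Z.
Hypothesis Hcoc : forall a b c, P a -> P b -> P c -> lt a b -> lt b c -> phi a b + phi b c = phi a c.

Lemma psi_add u v w : adj P lt u v -> adj P lt v w -> adj P lt u w ->
  psi phi u v + psi phi v w = psi phi u w.
Proof.
  intros [Pu [Pv Huv]] [_ [Pw Hvw]] [_ [_ Huw]].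
  destruct Huv as [<-|[Huv|Huv]].
  { rewrite psi_eq; lia. }
  all: destruct Hvw as [<-|[Hvw|Hvw]]; [rewrite psi_eq; lia| |].
  all: destruct Huw as [<-|Huw]; [rewrite psi_eq, (psi_anti phi v u); lia|].
  - (* u<v, v<w *) destruct Huw as [Huw|Huw].
    + rewrite !psi_lt by assumption. apply Hcoc; auto.
    + exfalso. apply (lt_asym u w); auto. apply (lt_trans u v w); auto.
  - (* u<v, w<v *) rewrite (psi_lt phi u v), (psi_gt phi v w) by assumption. destruct Huw as [Huw|Huw].
    + rewrite psi_lt by assumption. pose proof (Hcoc u w v Pu Pw Pv Huw Hvw). lia.
    + rewrite psi_gt by assumption. pose proof (Hcoc w u v Pw Pu Pv Huw Huv). lia.
  - (* v<u, v<w *) rewrite (psi_gt phi u v), (psi_lt phi v w) by assumption. destruct Huw as [Huw|Huw].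
    + rewrite psi_lt by assumption. pose proof (Hcoc v u w Pv Pu Pw Huv Huw). lia.
    + rewrite psi_gt by assumption. pose proof (Hcoc v w u Pv Pw Pu Hvw Huw). lia.
  - (* v<u, w<v *) destruct Huw as [Huw|Huw].
    + exfalso. apply (lt_asym u w); auto. apply (lt_trans w v u); auto.
    + rewrite !psi_gt by assumption. pose proof (Hcoc w v u Pw Pv Pu Hvw Huv). lia.
Qed.

Lemma Wp_app l1 u r : Wp phi (l1 ++ u :: r) = Wp phi (l1 ++ [u]) + Wp phi (u :: r).
Proof.
  induction l1 as [|a t IH]; [simpl; destruct r; lia|].
  destruct t as [|b t']; simpl; [lia|].
  simpl in IH. rewrite IH. lia.
Qed.

Lemma Wp_move l l' : edge_move P lt l l' -> Wp phi l = Wp phi l'.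
Proof.
  intros [[l1 [l2 [u [v [w [-> [-> [H1 [H2 H3]]]]]]]]] | [l1 [l2 [u [-> ->]]]]].
  - rewrite (Wp_app l1 u (v :: w :: l2)), (Wp_app l1 u (w :: l2)). f_equal. simpl. rewrite <- (psi_add u v w); auto. destruct l2; lia.
  - rewrite (Wp_app l1 u (u :: l2)), (Wp_app l1 u l2). f_equal. simpl. rewrite psi_eq. destruct l2; lia.
Qed.

Lemma Wp_equiv l l' : edge_equiv P lt l l' -> Wp phi l = Wp phi l'.
Proof.
  induction 1.
  - apply Wp_move; auto.
  - reflexivity.
  - auto.
  - congruence.
Qed.
End Ch.

Definition verts3 {V} (L : list (V * V * V)) : list V :=
  flat_map (fun t => match t with (a, b, c) => [a; b; c] end) L.

Lemma in_verts3 {V} (L : list (V * V * V)) a b c : In (a, b, c) L ->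
  In a (verts3 L) /\ In b (verts3 L) /\ In c (verts3 L).
Proof.
  intros H. unfold verts3. repeat split; apply in_flat_map; exists (a, b, c); simpl; auto.
Qed.

Lemma bd_pair {V} (P : V -> Prop) (lt : V -> V -> Prop) (w : V -> Z) V0 (c : chain1 V)
  (d : chain2 V) (L : list (V * V * V)) (U : list V) :
  (forall u v x, d u v x <> 0 -> P u /\ P v /\ P x /\ lt u v /\ lt v x) ->
  (forall u v x, d u v x <> 0 -> In (u, v, x) L) ->
  (forall u v, has_sum (fun x => d x u v - d u x v + d u v x) (c u v)) ->
  NoDup U -> (forall x, In x (verts3 L) -> In x U) ->
  (forall a b, P a -> P b -> lt a b -> lt b V0 -> w a = w b) ->
  (forall b, P b -> ~ lt V0 b) ->
  Sm U (fun u => w u * c u V0) = 0.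
Proof.
  intros Hd HL Hc NU HU Hw Hmax.
  assert (HdU : forall u v x, d u v x <> 0 -> In u U /\ In v U /\ In x U).
  { intros u v x H. destruct (in_verts3 L u v x (HL _ _ _ H)) as [? [? ?]]. auto. }
  rewrite (S_ext U _ (fun u => Sm U (fun x => w u * d x u V0) - Sm U (fun x => w u * d u x V0))).
  2:{ intros u Hu. rewrite (has_sum_eq _ _ U (Hc u V0) NU).
      - rewrite <- !S_scal, <- S_minus. apply S_ext. intros x _.
        assert (d u V0 x = 0).
        { destruct (Z.eq_dec (d u V0 x) 0); auto. exfalso. destruct (Hd _ _ _ n) as [_ [? [? [_ ?]]]].
          eapply Hmax; eauto. }
        lia.
      - intros x Hx. destruct (Z.eq_dec (d x u V0) 0); [destruct (Z.eq_dec (d u x V0) 0)|].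
        + apply (HdU u V0 x). lia.
        + apply (HdU u x V0). auto.
        + apply (HdU x u V0). auto. }
  rewrite S_minus.
  rewrite (S_ext U (fun u => Sm U (fun x => w u * d x u V0)) (fun u => Sm U (fun x => w x * d x u V0))).
  2:{ intros u _. apply S_ext. intros x _. destruct (Z.eq_dec (d x u V0) 0) as [E|E]; [rewrite E; lia|].
      destruct (Hd _ _ _ E) as [? [? [? [? ?]]]]. rewrite (Hw x u); auto. }
  rewrite S_swap. lia.
Qed.

Lemma lincomb_pair {V} (U : list V) (w : V -> Z) V0 a zs :
  Sm U (fun u => w u * lincomb a zs u V0) =
  fold_right (fun az acc => fst az * Sm U (fun u => w u * snd az u V0) + acc) 0 (combine a zs).
Proof.
  revert zs. induction a as [|a0 a IH]; intros zs.
  - simpl. apply S_zero. intros. unfold lincomb. simpl. lia.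
  - destruct zs as [|z0 zs].
    + simpl. apply S_zero. intros. unfold lincomb. simpl. lia.
    + simpl. rewrite <- IH, <- S_scal, <- S_plus. apply S_ext. intros x _.
      unfold lincomb. simpl. ring.
Qed.

Lemma fold_comb_map {X Y} (a : list Z) (I : list X) (f : X -> Y) (g : Y -> Z) (h : X -> Z) :
  (forall i, In i I -> g (f i) = h i) ->
  fold_right (fun az acc => fst az * g (snd az) + acc) 0 (combine a (map f I)) =
  fold_right (fun ax acc => fst ax * h (snd ax) + acc) 0 (combine a I).
Proof.
  revert a. induction I as [|i I IH]; intros a H; destruct a; simpl; auto.
  rewrite H by (simpl; auto). rewrite IH; [reflexivity|intros; apply H; simpl; auto].
Qed.

Lemma fold_notin {X} (a : list Z) (I : list X) x0 : ~ In x0 I ->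
  fold_right (fun ax acc => fst ax * - ind (snd ax = x0) + acc) 0 (combine a I) = 0.
Proof.
  revert a. induction I as [|i I IH]; intros a H; destruct a; simpl; auto.
  rewrite ind_F by (intros ->; apply H; simpl; auto). rewrite IH; [lia|]. intros Hin; apply H; simpl; auto.
Qed.

Lemma key_sum {X} (I : list X) (a : list Z) k0 dflt : NoDup I -> length a = length I ->
  (k0 < length I)%nat ->
  fold_right (fun ax acc => fst ax * - ind (snd ax = nth k0 I dflt) + acc) 0 (combine a I) = - nth k0 a 0.
Proof.
  revert a k0. induction I as [|i I IH]; intros a k0 ND Hl Hk; [simpl in Hk; lia|].
  destruct a as [|a0 a]; [simpl in Hl; lia|]. inversion ND; subst. simpl in Hl.
  destruct k0 as [|k].
  - simpl. rewrite ind_T by auto. rewrite fold_notin; auto. lia.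
  - simpl. rewrite ind_F.
    + rewrite IH; auto; [lia|simpl in Hk; lia].
    + intros E. apply H1. rewrite E. apply nth_In. simpl in Hk; lia.
Qed.

Lemma NoDup_prod {A B} (l : list A) (l' : list B) : NoDup l -> NoDup l' -> NoDup (list_prod l l').
Proof.
  intros N N'. induction N as [|a l Ha N IH]; simpl; [constructor|].
  apply NoDup_app; auto.
  - apply NoDup_map_NoDup_ForallPairs; auto. intros x y _ _ E. inversion E; auto.
  - intros [x y] H1 H2. apply in_map_iff in H1. destruct H1 as [z [E _]]. inversion E; subst.
    apply in_prod_iff in H2. tauto.
Qed.

Lemma lincomb_pad {V} (a : list Z) (zs : list (chain1 V)) r u v :
  length zs = (length a + r)%nat ->
  lincomb (a ++ repeat 0 r) zs u v = lincomb a (firstn (length a) zs) u v.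
Proof.
  revert zs. induction a as [|a0 a IH]; intros zs Hl.
  - simpl. unfold lincomb. simpl. revert zs Hl. induction r; intros zs Hl; destruct zs; simpl in *; auto.
    all: try (rewrite IHr; lia).
  - destruct zs as [|z0 zs]; simpl in Hl; [lia|]. unfold lincomb in *. simpl. rewrite IH; auto.
Qed.

Lemma firstn_in {X} k (l : list X) x : In x (firstn k l) -> In x l.
Proof.
  revert l. induction k; intros l H; destruct l; simpl in *; try tauto. destruct H; auto.
Qed.

Lemma rank_mono {V} (P : V -> Prop) lt k k' : (k <= k')%nat -> H1_rank_ge P lt k' -> H1_rank_ge P lt k.
Proof.
  intros Hkk [zs [Hl [Hcy Hind]]]. exists (firstn k zs). split; [rewrite length_firstn; lia|]. split.
  - rewrite Forall_forall in *. intros x Hx. apply Hcy, (firstn_in k), Hx.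
  - intros a Ha Hex Hbd. apply (Hind (a ++ repeat 0 (k' - k))).
    + rewrite length_app, repeat_length. lia.
    + apply Exists_app; auto.
    + assert (E : lincomb (a ++ repeat 0 (k' - k)) zs = lincomb a (firstn k zs)).
      { apply functional_extensionality; intros u; apply functional_extensionality; intros v.
        rewrite lincomb_pad; [rewrite Ha; auto|lia]. }
      rewrite E. auto.
Qed.

Section Main.
Variable G : group.
Variable M : G -> Prop.
Variables p n : nat.
Variable m t : G.
Hypothesis Hp : prime (Z.of_nat p).
Hypothesis Hnc : ~ cyclic_group G.
Hypothesis Hmax : maximal_subgroup M.
Hypothesis HM : forall x, M x <-> exists z, x = gpow m z.
Hypothesis Hord : gpow m (Z.of_nat p ^ Z.of_nat n) = gone.
Hypothesis Ho2 : forall e, gpow m e = gone -> (Z.of_nat p | e).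
Hypothesis Ht : ~ M t.

Definition PZ := Z.of_nat p.
Definition K := Ksub m PZ.
Definition Pv := coset_poset G.
Definition ltv := @proper_incl G.

Lemma HMs : subgroup M.
Proof. exact (proj1 (proj1 Hmax)). Qed.
Lemma Hp2 : (2 <= p)%nat.
Proof. pose proof (prime_ge_2 _ Hp). lia. Qed.

Lemma HK H : subgroup H -> (forall x, H x -> M x) -> ~ (forall x, M x -> H x) -> forall x, H x -> K x.
Proof. intros. eapply (HsubK G M m p n H Hp HM Hord); eauto. Qed.

Lemma M1 : M gone.
Proof. exact (proj1 HMs). Qed.

Lemma m_ne1 : m <> gone.
Proof.
  intros E. assert (gpow m 1 = gone) by (rewrite gpow1; auto). apply Ho2 in H.
  apply Z.divide_pos_le in H; [|lia]. pose proof Hp2. unfold PZ in *. lia.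
Qed.

Lemma Mm : M m.
Proof. apply HM. exists 1. rewrite gpow1; auto. Qed.

Lemma Mpow z : M (gpow m z).
Proof. apply HM. eauto. Qed.

Definition sI (i : nat) := gmul (ginv t) (gpow m (Z.of_nat i)).

Lemma sI_notM i : ~ M (sI i).
Proof.
  intros Hs. apply Ht. destruct HMs as [_ [HMM HMI]].
  replace t with (gmul (gpow m (Z.of_nat i)) (ginv (sI i))).
  - apply HMM; auto. apply Mpow.
  - unfold sI. rewrite invM, invK, mulKVg. reflexivity.
Qed.

Lemma ne1_of_notM s : ~ M s -> s <> gone.
Proof. intros H E; subst; apply H, M1. Qed.

Lemma Triv_proper : @proper_subgroup G Triv.
Proof. split; [apply Triv_sub|]. exists t. unfold Triv. apply ne1_of_notM, Ht. Qed.
Lemma M_proper : proper_subgroup M.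
Proof. exact (proj1 Hmax). Qed.
Lemma Cyc_proper (g : G) : proper_subgroup (Cyc g).
Proof.
  split; [apply Cyc_sub|]. apply NNPP; intros H. apply Hnc. exists g. intros x.
  apply NNPP; intros H'. apply H. exists x. intros [z E]. apply H'. eauto.
Qed.

Lemma PvT x : Pv (lcoset x Triv).
Proof. exists x, Triv. split; auto. apply Triv_proper. Qed.
Lemma PvM x : Pv (lcoset x M).
Proof. exists x, M. split; auto. apply M_proper. Qed.
Lemma PvC (x g : G) : Pv (lcoset x (Cyc g)).
Proof. exists x, (Cyc g). split; auto. apply Cyc_proper. Qed.

Definition walk (x : G) (i : nat) : list (G -> Prop) :=
  [lcoset x Triv; lcoset x M; lcoset (gmul x (gpow m (Z.of_nat i))) Triv;
   lcoset (gmul x t) (Cyc (sI i)); lcoset (gmul x t) Triv; lcoset x (Cyc t); lcoset x Triv].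

Lemma lt1 x : ltv (lcoset x Triv) (lcoset x M).
Proof. apply sing_lt; [apply HMs| exists m; split; [apply Mm|apply m_ne1] | apply lcoset_self, HMs]. Qed.
Lemma lt2 x i : ltv (lcoset (gmul x (gpow m (Z.of_nat i))) Triv) (lcoset x M).
Proof. apply sing_lt; [apply HMs| exists m; split; [apply Mm|apply m_ne1] | exists (gpow m (Z.of_nat i)); split; auto; apply Mpow]. Qed.
Lemma lt3 x i : ltv (lcoset (gmul x (gpow m (Z.of_nat i))) Triv) (lcoset (gmul x t) (Cyc (sI i))).
Proof.
  apply sing_lt; [apply Cyc_sub| exists (sI i); split; [apply Cyc_self|apply ne1_of_notM, sI_notM] |].
  exists (sI i). split; [apply Cyc_self|]. unfold sI. rewrite <- gmulA, mulKVg. reflexivity.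
Qed.
Lemma lt4 x i : ltv (lcoset (gmul x t) Triv) (lcoset (gmul x t) (Cyc (sI i))).
Proof. apply sing_lt; [apply Cyc_sub| exists (sI i); split; [apply Cyc_self|apply ne1_of_notM, sI_notM] | apply lcoset_self, Cyc_sub]. Qed.
Lemma lt5 x : ltv (lcoset (gmul x t) Triv) (lcoset x (Cyc t)).
Proof. apply sing_lt; [apply Cyc_sub| exists t; split; [apply Cyc_self|apply ne1_of_notM, Ht] | exists t; split; auto; apply Cyc_self]. Qed.
Lemma lt6 x : ltv (lcoset x Triv) (lcoset x (Cyc t)).
Proof. apply sing_lt; [apply Cyc_sub| exists t; split; [apply Cyc_self|apply ne1_of_notM, Ht] | apply lcoset_self, Cyc_sub]. Qed.

Lemma walk_ok x i : steps_ok Pv ltv (walk x i).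
Proof.
  simpl. repeat split; try apply PvT; try apply PvM; try apply PvC.
  - left; apply lt1.
  - right; apply lt2.
  - left; apply lt3.
  - right; apply lt4.
  - left; apply lt5.
  - right; apply lt6.
Qed.

Lemma ltv_irr u : ~ ltv u u.
Proof. apply pi_irrefl. Qed.
Lemma ltv_trans u v w : ltv u v -> ltv v w -> ltv u w.
Proof. apply pi_trans. Qed.

Lemma walk_cycle x i : is_1cycle Pv ltv (wchain ltv (walk x i)).
Proof. apply (wchain_cycle Pv ltv (walk x i) (lcoset x Triv)); auto. apply walk_ok. Qed.

Definition wgt (y : G) (j : nat) (u : G -> Prop) : Z :=
  ind (forall g, u g -> lcoset (gmul y (gpow m (Z.of_nat j))) K g).
Definition phi (y : G) (j : nat) (u v : G -> Prop) : Z := wgt y j u * ind (v = lcoset y M).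

Lemma K_sub : subgroup K.
Proof. apply Ksub_sub. Qed.

Lemma wgt_loc y j a b : Pv a -> Pv b -> ltv a b -> ltv b (lcoset y M) -> wgt y j a = wgt y j b.
Proof.
  intros. unfold wgt. apply ind_iff. apply (P1 G M K y); auto; [apply HMs|apply K_sub|apply HK].
Qed.

Lemma maxv y b : Pv b -> ~ ltv (lcoset y M) b.
Proof. intros. apply maxV; auto. Qed.

Lemma coc y j a b c : Pv a -> Pv b -> Pv c -> ltv a b -> ltv b c -> phi y j a b + phi y j b c = phi y j a c.
Proof.
  intros Pa Pb Pc Hab Hbc. unfold phi.
  rewrite (ind_F (b = lcoset y M)) by (intros ->; eapply maxv; eauto).
  destruct (classic (c = lcoset y M)) as [->|Hc].
  - rewrite (wgt_loc y j a b); auto. lia.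
  - rewrite !ind_F by auto. lia.
Qed.

Lemma walk_W x i y j : Wp ltv (phi y j) (walk x i) =
  (wgt y j (lcoset x Triv) - wgt y j (lcoset (gmul x (gpow m (Z.of_nat i))) Triv)) * ind (lcoset x M = lcoset y M).
Proof.
  unfold walk. cbn [Wp].
  rewrite (psi_lt Pv ltv _ _ _ (lt1 x)).
  rewrite (psi_gt Pv ltv ltv_irr ltv_trans _ _ _ (lt2 x i)).
  rewrite (psi_lt Pv ltv _ _ _ (lt3 x i)).
  rewrite (psi_gt Pv ltv ltv_irr ltv_trans _ _ _ (lt4 x i)).
  rewrite (psi_lt Pv ltv _ _ _ (lt5 x)).
  rewrite (psi_gt Pv ltv ltv_irr ltv_trans _ _ _ (lt6 x)).
  unfold phi.
  rewrite (ind_F (lcoset (gmul x t) (Cyc (sI i)) = lcoset y M)) by (apply neqV; [apply HMs|apply sI_notM]).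
  rewrite (ind_F (lcoset x (Cyc t) = lcoset y M)) by (apply neqV; [apply HMs|apply Ht]).
  ring.
Qed.

Lemma sing_sub (a : G) (C : G -> Prop) : (forall g, lcoset a Triv g -> C g) <-> C a.
Proof.
  split; intros H.
  - apply H, lcoset_Triv; auto.
  - intros g Hg. apply lcoset_Triv in Hg. subst; auto.
Qed.

Lemma Kco y i j : lcoset (gmul y (gpow m j)) K (gmul y (gpow m i)) <-> (PZ | i - j).
Proof.
  split.
  - intros Hc. apply lcoset_mem in Hc; [|apply K_sub].
    rewrite invM, <- gmulA, mulKg, <- gpow_opp, <- gpow_add in Hc.
    destruct Hc as [z Hz]. symmetry in Hz. apply gpow_diff in Hz. apply Ho2 in Hz.
    destruct Hz as [k Hk]. exists (k + z). unfold PZ in *. nia.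
  - intros [z Hz]. apply lcoset_memP. rewrite invM, <- gmulA, mulKg, <- gpow_opp, <- gpow_add.
    exists z. f_equal. unfold PZ in *. nia.
Qed.

Lemma small_div (d : Z) : (PZ | d) -> - PZ < d < PZ -> d = 0.
Proof. intros [k ->] H. unfold PZ in *. pose proof Hp2. assert (2 <= Z.of_nat p) by lia. destruct (Z_lt_le_dec k 0); [nia|]. destruct (Z.eq_dec k 0); [subst; lia|nia]. Qed.

Lemma wgt_self y j : (1 <= j <= p - 1)%nat -> wgt y j (lcoset y Triv) = 0.
Proof.
  intros Hj. apply ind_F. rewrite sing_sub. intros Hc.
  assert (E : y = gmul y (gpow m 0)) by (simpl; rewrite mul1r; auto).
  rewrite E in Hc at 2. apply Kco in Hc. apply small_div in Hc; unfold PZ; lia.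
Qed.

Lemma wgt_pt y i j : (1 <= i <= p - 1)%nat -> (1 <= j <= p - 1)%nat ->
  wgt y j (lcoset (gmul y (gpow m (Z.of_nat i))) Triv) = ind (i = j).
Proof.
  intros Hi Hj. apply ind_iff. rewrite sing_sub, Kco. split.
  - intros Hc. apply small_div in Hc; unfold PZ; lia.
  - intros ->. exists 0. lia.
Qed.

Lemma nodup_fop (R : G -> G -> Prop) l : ForallOrdPairs R l -> (forall a, ~ R a a) -> NoDup l.
Proof.
  induction 1 as [|a l Hf Hl IH]; intros Hr; constructor; auto.
  intros Ha. rewrite Forall_forall in Hf. apply (Hr a), Hf, Ha.
Qed.

Lemma pair_val reps x i y j : distinct_lcosets M reps -> In x reps -> In y reps ->
  (1 <= i <= p - 1)%nat -> (1 <= j <= p - 1)%nat ->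
  Wp ltv (phi y j) (walk x i) = - ind ((x, i) = (y, j)).
Proof.
  intros Hd Hx Hy Hi Hj. rewrite walk_W.
  destruct (classic (x = y)) as [<-|Hxy].
  - rewrite ind_T by auto. rewrite wgt_self, wgt_pt by auto.
    rewrite (ind_iff ((x, i) = (x, j)) (i = j)) by (split; [intros E; inversion E; auto|intros ->; auto]).
    lia.
  - rewrite (ind_F ((x, i) = (y, j))) by congruence.
    rewrite (ind_F (lcoset x M = lcoset y M)); [lia|].
    intros E. destruct (ForallOrdPairs_In Hd x y Hx Hy) as [|[H|H]]; auto; apply H; rewrite E; tauto.
Qed.

Definition zz (xi : G * nat) : chain1 (G -> Prop) := wchain ltv (walk (fst xi) (snd xi)).

Lemma part1 reps : distinct_lcosets M reps -> H1_rank_ge Pv ltv ((p - 1) * length reps).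
Proof.
  intros Hd.
  set (I := list_prod reps (seq 1 (p - 1))).
  assert (NDI : NoDup I).
  { apply NoDup_prod; [|apply seq_NoDup]. apply (nodup_fop _ reps Hd). intros a H; apply H; tauto. }
  exists (map zz I). split; [|split].
  - rewrite length_map. unfold I. rewrite length_prod, length_seq. lia.
  - apply Forall_forall. intros z Hz. apply in_map_iff in Hz. destruct Hz as [xi [<- _]]. apply walk_cycle.
  - intros a Ha Hex [d [[Hd2 [L HL]] Hc]].
    apply Exists_nth in Hex. destruct Hex as [k0 [dd [Hk0 Hnz]]].
    rewrite nth_indep with (d' := 0) in Hnz by auto.
    assert (HaI : length a = length I) by (unfold I; rewrite length_prod, length_seq; lia).
    destruct (nth k0 I (gone, 0%nat)) as [y j] eqn:Ei0.
    assert (Hi0 : In (y, j) I) by (rewrite <- Ei0; apply nth_In; lia).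
    apply in_prod_iff in Hi0. destruct Hi0 as [Hy Hj]. apply in_seq in Hj.
    set (U := nodup eqd (verts3 L ++ flat_map (fun xi => walk (fst xi) (snd xi)) I)).
    assert (NU : NoDup U) by apply NoDup_nodup.
    assert (E0 : Sm U (fun u => wgt y j u * lincomb a (map zz I) u (lcoset y M)) = 0).
    { apply (bd_pair Pv ltv (wgt y j) (lcoset y M) _ d L U); auto.
      - intros x Hx. apply nodup_In, in_app_iff; auto.
      - intros; apply wgt_loc; auto.
      - intros; apply maxv; auto. }
    assert (Hpv : forall xi, In xi I -> Sm U (fun u => wgt y j u * zz xi u (lcoset y M)) =
                                      - ind (xi = nth k0 I (gone, 0%nat))).
    { intros [x i] Hxi. unfold zz. cbn [fst snd].
      rewrite (wchain_pair Pv ltv ltv_irr ltv_trans U (walk x i) (wgt y j) (lcoset y M) NU).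
      * fold (phi y j). rewrite Ei0. apply in_prod_iff in Hxi. destruct Hxi as [Hx Hi]. apply in_seq in Hi.
        apply (pair_val reps); auto; lia.
      * intros v Hv. apply nodup_In, in_app_iff. right. apply in_flat_map. exists (x, i); auto.
      * apply walk_ok. }
    pose proof (fold_comb_map a I zz (fun z => Sm U (fun u => wgt y j u * z u (lcoset y M)))
               (fun xi => - ind (xi = nth k0 I (gone, 0%nat))) Hpv) as EF.
    rewrite lincomb_pair in E0. pose proof (eq_trans (eq_sym EF) E0) as E1. clear E0 EF.
    pose proof (key_sum I a k0 (gone, 0%nat) NDI HaI ltac:(lia)) as KS. pose proof (eq_trans (eq_sym KS) E1). lia.
Qed.

Lemma part3 : ~ simply_connected Pv ltv.
Proof.
  intros [_ [_ Hsc]].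
  assert (Hp1 : (1 <= 1 <= p - 1)%nat) by (pose proof Hp2; lia).
  assert (Hpath : is_edge_path Pv ltv (walk gone 1)).
  { pose proof (walk_ok gone 1) as Hok. simpl in Hok. simpl.
    unfold adj. intuition; apply PvT. }
  pose proof (Hsc (lcoset gone Triv) (walk gone 1) (PvT gone) Hpath eq_refl eq_refl) as Heq.
  pose proof (Wp_equiv Pv ltv ltv_irr ltv_trans (phi gone 1) (coc gone 1) _ _ Heq) as EW.
  rewrite walk_W in EW. rewrite wgt_self, wgt_pt, ind_T, ind_T in EW by auto. simpl in EW. lia.
Qed.

End Main.

Lemma reps_exist (G : group) (M : G -> Prop) (LM : list G) : subgroup M -> (forall x, M x <-> In x LM) ->
  infinite_group G -> forall k, exists reps, distinct_lcosets M reps /\ length reps = k.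
Proof.
  intros HMs HL Hinf k. induction k as [|k [reps [Hd Hl]]].
  - exists []. split; [constructor|reflexivity].
  - assert (Hg : exists g, forall r, In r reps -> ~ lcoset r M g).
    { apply NNPP; intros Hno. apply Hinf. exists (flat_map (fun r => map (gmul r) LM) reps).
      intros x. apply NNPP; intros Hx. apply Hno. exists x. intros r Hr [h [Hh ->]]. apply Hx.
      apply in_flat_map. exists r. split; auto. apply in_map. apply HL; auto. }
    destruct Hg as [g Hg]. exists (g :: reps). split; [|simpl; lia].
    constructor; auto. apply Forall_forall. intros y Hy Hiff. apply (Hg y Hy). apply Hiff.
    apply lcoset_self; auto.
Qed.

Theorem mainTheorem10 (G : group) (M : G -> Prop) (p n : nat) :
  prime (Z.of_nat p) -> (1 <= n)%nat ->
  ~ cyclic_group G ->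
  maximal_subgroup M -> cyclic_subgroup M -> has_card M (p ^ n) ->
  (forall reps : list G, distinct_lcosets M reps ->
     H1_rank_ge (coset_poset G) proper_incl ((p - 1) * length reps)) /\
  (infinite_group G -> H1_infinite_rank (coset_poset G) proper_incl) /\
  ~ simply_connected (coset_poset G) proper_incl.
Proof.
  intros Hp Hn Hnc Hmax [m HM] Hcard.
  destruct (order_facts G M m (p ^ n) HM Hcard) as [O1 O2N].
  pose proof (order_p G m p n Hn O2N) as Ho2.
  assert (Hord : gpow m (Z.of_nat p ^ Z.of_nat n) = gone) by (rewrite <- Nat2Z.inj_pow; auto).
  destruct (proj2 (proj1 Hmax)) as [t Ht].
  assert (HMs : subgroup M) by exact (proj1 (proj1 Hmax)).
  split; [|split].
  - intros reps Hd. eapply part1; eauto.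
  - intros Hinf k. destruct Hcard as [LM [_ [_ HL]]].
    destruct (reps_exist G M LM HMs HL Hinf k) as [reps [Hd Hl]].
    apply (rank_mono _ _ k ((p - 1) * length reps)).
    + pose proof (prime_ge_2 _ Hp). rewrite Hl. nia.
    + eapply part1; eauto.
  - eapply part3; eauto.
Qed.
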